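(* Let $q$ be a prime power, $k,m,t$ positive integers, and $V=\mathbb F_{q^m}^{k+1}$. Let $H$ be an $\mathbb F_{q^m}$-hyperplane of $V$ and let $W\subseteq H$ be an $\mathbb F_q$-subspace with $\dim_{\mathbb F_q}(W)=t$ which is a linear cutting blocking set in $H$ (i.e. $\langle W\rangle_{\mathbb F_{q^m}}=H$ and $\langle W\cap H'\rangle_{\mathbb F_{q^m}}=H'$ for every $\mathbb F_{q^m}$-hyperplane $H'$ of $H$). Let $v\in V\setminus H$. Then $U=W+\langle v\rangle_{\mathbb F_{q^m}}$ is a cutting $[t+m,k+1]_{q^m/q}$ system.
   Context: An $[n,k]_{q^m/q}$ system is an $\mathbb F_q$-subspace $U$ of $\mathbb F_{q^m}^k$ with $\dim_{\mathbb F_q}(U)=n$ and $\langle U\rangle_{\mathbb F_{q^m}}=\mathbb F_{q^m}^k$. It is cutting if for every $\mathbb F_{q^m}$-hyperplane $\Pi$ of the ambient space one has $\langle \Pi\cap U\rangle_{\mathbb F_{q^m}}=\Pi$. *)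

(* Defs.v *)
From HB Require Import structures.
From mathcomp Require Import all_boot all_order all_algebra all_field.
Set Implicit Arguments. Unset Strict Implicit. Unset Printing Implicit Defensive.
Import GRing.Theory.
Local Open Scope ring_scope.

(* F plays the role of F_q, L the role of F_{q^m} (a finite extension of F),
   ambient space 'rV[L]_n = F_{q^m}^n.  F_q-subspaces are represented as
   predicates closed under + and scaling by elements of F (embedded in L). *)

Definition Fscale (F : fieldType) (L : fieldExtType F) (n : nat)
  (a : F) (x : 'rV[L]_n) : 'rV[L]_n := (a%:A : L) *: x.

Definition is_Fsubspace (F : fieldType) (L : fieldExtType F) (n : nat)
  (U : 'rV[L]_n -> Prop) : Prop :=
  [/\ U 0, (forall x y, U x -> U y -> U (x + y))
    & (forall (a : F) x, U x -> U (Fscale a x))].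

Definition Fdim (F : fieldType) (L : fieldExtType F) (n : nat)
  (U : 'rV[L]_n -> Prop) (d : nat) : Prop :=
  exists b : 'I_d -> 'rV[L]_n,
    [/\ (forall i, U (b i)),
        (forall c : 'I_d -> F, \sum_i Fscale (c i) (b i) = 0 -> forall i, c i = 0)
      & (forall u, U u -> exists c : 'I_d -> F, u = \sum_i Fscale (c i) (b i))].

Definition Lspan_is (L : fieldType) (n : nat) (U : 'rV[L]_n -> Prop)
  (S : {vspace 'rV[L]_n}) : Prop :=
  (forall u, U u -> u \in S) /\
  exists s : seq 'rV[L]_n, (forall x, x \in s -> U x) /\ <<s>>%VS = S.

Definition is_hyperplane_of (L : fieldType) (n : nat)
  (P S : {vspace 'rV[L]_n}) : Prop :=
  (P <= S)%VS /\ \dim P = (\dim S).-1.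

Definition is_cutting_system (F : fieldType) (L : fieldExtType F) (n : nat)
  (U : 'rV[L]_n -> Prop) (d : nat) : Prop :=
  [/\ is_Fsubspace U, Fdim U d, Lspan_is U fullv
    & forall P : {vspace 'rV[L]_n}, is_hyperplane_of P fullv ->
        Lspan_is (fun x => U x /\ x \in P) P].

(* Main.v *)
Require Import Defs.
From HB Require Import structures.
From mathcomp Require Import all_boot all_order all_algebra all_field.
From mathcomp Require Import zify.
Set Implicit Arguments. Unset Strict Implicit. Unset Printing Implicit Defensive.
Import GRing.Theory.
Local Open Scope ring_scope.

Lemma dim_add_line_notin (K : fieldType) (vT : vectType K) (U : {vspace vT}) (v : vT) :
  v \notin U -> \dim (U + <[v]>) = (\dim U).+1.
Proof.
move=> hv.
have v0 : v != 0 by apply: contraNneq hv => ->; rewrite mem0v.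
rewrite dimv_disjoint_sum ?dim_vline ?v0 ?addn1 //.
apply/eqP; rewrite -subv0; apply/subvP => x /memv_capP [xU /vlineP [c xc]].
rewrite memv0; apply/eqP; move: xU; rewrite xc.
have [->|c0] := eqVneq c 0; first by rewrite scale0r.
move=> cvU; exfalso; move/negP: hv; apply.
by rewrite -(scalerK c0 v) memvZ.
Qed.

Lemma eq_by_dim (K : fieldType) (vT : vectType K) (U V : {vspace vT}) :
  (U <= V)%VS -> (\dim V <= \dim U)%N -> U = V.
Proof. by move=> h1 h2; apply/eqP; rewrite eqEdim h1 h2. Qed.

Lemma dim_rV (L : fieldType) n : \dim (fullv : {vspace 'rV[L]_n}) = n.
Proof. by rewrite dimvf /dim /= mul1n. Qed.

Theorem proposition3p7 (F : finFieldType) (L : fieldExtType F) (k m t : nat)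
  (hk : (0 < k)%N) (hm : (0 < m)%N) (ht : (0 < t)%N)
  (hLm : \dim (fullv : {vspace L}) = m)
  (H : {vspace 'rV[L]_(k.+1)}) (hH : is_hyperplane_of H fullv)
  (W : 'rV[L]_(k.+1) -> Prop) (hW : is_Fsubspace W) (hWt : Fdim W t)
  (hWH : forall w, W w -> w \in H)
  (hWspan : Lspan_is W H)
  (hWcut : forall H' : {vspace 'rV[L]_(k.+1)}, is_hyperplane_of H' H ->
             Lspan_is (fun x => W x /\ x \in H') H')
  (v : 'rV[L]_(k.+1)) (hv : v \notin H) :
  is_cutting_system (fun u => exists w (c : L), W w /\ u = w + c *: v) (t + m).
Proof.
subst m.
have dimH : \dim H = k by case: hH => _; rewrite dim_rV.
set U := fun u => _.
have WU : forall w, W w -> U w by move=> w Ww; exists w, 0; rewrite scale0r addr0.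
have vU : U v by exists 0, 1; case: hW => W0 _ _; rewrite scale1r add0r.
case: hWspan => _ [sW [sWW spanW]].
case: hW => W0 WD WZ.
split.
- split; first exact: WU.
  + move=> x y [w1 [c1 [Ww1 ->]]] [w2 [c2 [Ww2 ->]]].
    exists (w1 + w2), (c1 + c2); split; first exact: WD.
    by rewrite scalerDl addrACA.
  + move=> a x [w [c [Ww ->]]]; exists (Fscale a w), (a%:A * c); split; first exact: WZ.
    by rewrite /Fscale scalerDr scalerA.
- case: hWt => b [bW bfree bspan].
  set n := \dim (fullv : {vspace L}).
  set e := vbasis (fullv : {vspace L}).
  have sl (j : 'I_t) : split (lshift n j) = inl j := unsplitK (inl j).
  have sr (j : 'I_n) : split (rshift t j) = inr j := unsplitK (inr j).
  pose b' (i : 'I_(t + n)) := match split i with inl j => b j | inr j => e`_j *: v end.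
  have sumE (c : 'I_(t + n) -> F) : \sum_i Fscale (c i) (b' i) =
      \sum_j Fscale (c (lshift n j)) (b j) + (\sum_j c (rshift t j) *: e`_j) *: v.
    rewrite big_split_ord /= scaler_suml; congr (_ + _); apply: eq_bigr => j _.
      by rewrite /b' sl.
    by rewrite /b' sr /Fscale scalerA mulr_algl.
  exists b'; split.
  + by move=> i; rewrite /b'; case: (split i) => j; [exact: WU | exists 0, e`_j; rewrite add0r].
  + move=> c; rewrite sumE => hc.
    set g := \sum_j _ *: _ in hc.
    have S1H : \sum_j Fscale (c (lshift n j)) (b j) \in H.
      by apply: memv_suml => j _; rewrite /Fscale memvZ // hWH.
    have g0 : g = 0.
      apply/eqP; apply: contraNT hv => g0.
      have : g *: v \in H by rewrite -(addr0_eq hc) rpredN.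
      by move=> /(memvZ g^-1); rewrite scalerA mulVf // scale1r.
    have hr : forall j, c (rshift t j) = 0.
      by apply/freeP; [exact: (basis_free (vbasisP fullv)) | exact: g0].
    have hl : forall j, c (lshift n j) = 0.
      by apply: bfree; move: hc; rewrite g0 scale0r addr0.
    by move=> i; rewrite -[i]splitK; case: (split i) => j /=.
  + move=> u [w [c [Ww ->]]].
    have [cw ->] := bspan w Ww.
    exists (fun i => match split i with inl j => cw j | inr j => coord e j c end).
    rewrite sumE; congr (_ + _).
      by apply: eq_bigr => j _; rewrite sl.
    congr (_ *: _); rewrite [LHS](coord_vbasis (memvf c)).
    by apply: eq_bigr => j _; rewrite sr.
- split; first by move=> *; exact: memvf.
  exists (sW ++ [:: v]); split.
    by move=> x; rewrite mem_cat inE => /orP [/sWW/WU|/eqP ->].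
  rewrite span_cat span_seq1 spanW; apply: eq_by_dim; first exact: subvf.
  by rewrite dim_add_line_notin // dim_rV dimH.
- move=> P [_]; rewrite dim_rV /= => dimP.
  split; first by move=> u [].
  have [->|nPH] := eqVneq P H.
    exists sW; split; last exact: spanW.
    by move=> x /sWW Wx; split; [exact: WU | exact: hWH].
  have nsub : ~~ (P <= H)%VS.
    by apply: contraNN nPH => sPH; apply/eqP; apply: eq_by_dim => //; rewrite dimH dimP.
  have HPf : (H + P)%VS = fullv.
    apply: eq_by_dim; first exact: subvf.
    rewrite dim_rV.
    have : (\dim (H + P) != k)%N.
      apply/negP => /eqP d; move/negP: nsub; apply.
      have e : H = (H + P)%VS by apply: eq_by_dim; [exact: addvSl | rewrite d dimH].
      rewrite [X in (_ <= X)%VS]e; exact: addvSr.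
    have : (\dim H <= \dim (H + P))%N by rewrite dimvS // addvSl.
    rewrite dimH.
    lia.
  have dimcap : \dim (H :&: P) = k.-1.
    have := dimv_sum_cap H P; rewrite HPf dim_rV dimH dimP; lia.
  set H' := (H :&: P)%VS.
  have [_ [s' [s'W spanH']]] := hWcut H' (conj (capvSl H P) (etrans dimcap (congr1 _ (esym dimH)))).
  have [w0 w0s w0H'] : exists2 w0, w0 \in sW & w0 \notin H'.
    apply/allPn; apply/negP => /allP hall.
    have : (H <= H')%VS by rewrite -spanW; apply/span_subvP.
    move/dimvS; rewrite dimcap dimH; lia.
  have HH' : H = (H' + <[w0]>)%VS.
    apply/esym/eq_by_dim.
      by rewrite subv_add capvSl -memvE; apply/hWH/sWW.
    by rewrite dim_add_line_notin // dimcap dimH; lia.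
  have [u [Uu uP uH]] : exists u, [/\ U u, u \in P & u \notin H].
    have : v \in (H + P)%VS by rewrite HPf memvf.
    move=> /memv_addP [h hHm [p pP vE]].
    have : h \in (H' + <[w0]>)%VS by rewrite -HH'.
    move=> /memv_addP [h' h'H' [y /vlineP [be ->] hE]].
    have h'P : h' \in P by move: h'H'; rewrite memv_cap => /andP [].
    have [be0|be0] := eqVneq be 0.
      exists v; split => //.
      by rewrite vE hE be0 scale0r addr0 memvD.
    exists (w0 + (- be^-1) *: v).
    split.
    + by exists w0, (- be^-1); split => //; exact: sWW.
    + have -> : w0 + (- be^-1) *: v = (- be^-1) *: (h' + p).
        rewrite vE hE !scalerDr scalerA mulNr mulVf // scaleN1r.
        by rewrite addrCA addrA subrK.
      by rewrite memvZ // memvD.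
    + apply/negP => /(memvB (hWH _ (sWW _ w0s))).
      rewrite opprD addrA subrr add0r rpredN => /(memvZ (- be)); rewrite scalerA mulrNN divff // scale1r.
      by apply/negP.
  exists (s' ++ [:: u]); split.
    move=> x; rewrite mem_cat inE => /orP [/s'W [Wx xH']|/eqP ->].
      by split; [exact: WU | move: xH'; rewrite memv_cap => /andP []].
    by split.
  rewrite span_cat span_seq1 spanH'; apply: eq_by_dim.
    by rewrite subv_add capvSr -memvE.
  rewrite dim_add_line_notin ?dimcap ?dimP; first by lia.
  by apply: contra uH; rewrite memv_cap => /andP [].
Qed.
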